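(* Let $r\ge1$ and $n_1,m_1,\ldots,n_r,m_r\ge1$ be integers with $n_1+\cdots+n_r=m_1+\cdots+m_r$, let $\mathbf{S}=(1^{n_1},\ast^{m_1},\ldots,1^{n_r},\ast^{m_r})$, and let $i=\min\{n_1,m_1,\ldots,n_r,m_r\}$. Then \[ |NC_2(\mathbf{S})|\ge(1+i)^{r-1}. \]
   Context: $1^{k}$ denotes $k$ consecutive entries equal to $1$ (similarly $\ast^k$), so $\mathbf{S}$ is a string of length $N=2(n_1+\cdots+n_r)$ in the symbols $1,\ast$ with $r$ runs. $NC_2(\mathbf{S})$ is the set of non-crossing pairings of $\{1,\ldots,N\}$ in which every pair joins a position carrying $1$ with a position carrying $\ast$ in $\mathbf{S}$. *)

(* Defs.v *)
From mathcomp Require Import all_boot all_order.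
Set Implicit Arguments. Unset Strict Implicit. Unset Printing Implicit Defensive.

(* A string in the symbols 1 and * is a seq bool: true = 1, false = *.
   Positions are 0-based: 'I_(size S) stands for {1,...,N}. *)

Definition runString (r : nat) (n m : 'I_r -> nat) : seq bool :=
  flatten [seq nseq (n k) true ++ nseq (m k) false | k <- enum 'I_r].

(* A pairing of {0..N-1} is a fixed-point-free involution p; the pairs are
   {x, p x}. *)
Definition is_pairing (N : nat) (p : {ffun 'I_N -> 'I_N}) : bool :=
  [forall x, (p (p x) == x) && (p x != x)].

Definition is_noncrossing (N : nat) (p : {ffun 'I_N -> 'I_N}) : bool :=
  [forall a : 'I_N, forall b : 'I_N,
     ~~ [&& (a < b)%N, (b < p a)%N, (p a < p b)%N & (p b != a)]].

Definition respects (S : seq bool) (p : {ffun 'I_(size S) -> 'I_(size S)}) : bool :=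
  [forall x, nth false S (p x) != nth false S x].

Arguments respects : clear implicits.

Definition NC2 (S : seq bool) : {set {ffun 'I_(size S) -> 'I_(size S)}} :=
  [set p | [&& is_pairing p, is_noncrossing p & respects S p]].

(* minimum of a nonempty list (head 0 for the empty list) *)
Definition minseq (s : seq nat) : nat := foldr minn (head 0%N s) s.

Definition imin (r : nat) (n m : 'I_r -> nat) : nat :=
  minseq (flatten [seq [:: n k; m k] | k <- enum 'I_r]).

(* Main.v *)
Require Import Defs.
From mathcomp Require Import all_boot all_order.
From mathcomp Require Import zify.
Set Implicit Arguments. Unset Strict Implicit. Unset Printing Implicit Defensive.

Definition sh k w y := if y < k then y else y + w.
Definition ush k w z := if z < k then z else z - w.
Definition ins k w (q g : nat -> nat) z :=
  if z < k then sh k w (g z) else if z < k + w then k + q (z - k)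
  else sh k w (g (z - w)).

Definition NCnat (S : seq bool) (g : nat -> nat) : Prop :=
  [/\ forall z, z < size S -> g z < size S,
      forall z, z < size S -> g (g z) = z,
      forall z, z < size S -> g z <> z,
      forall z, z < size S -> nth false S (g z) <> nth false S z &
      forall a b, a < size S -> b < size S -> a < b -> b < g a -> g a < g b -> False].

Section Ins.
Variables (S' W S : seq bool) (k : nat) (g q : nat -> nat).
Hypothesis hk : k <= size S'.
Hypothesis hS : S = take k S' ++ W ++ drop k S'.
Hypothesis hg : NCnat S' g.
Hypothesis hq : NCnat W q.
Let w := size W.

Lemma sizeS : size S = size S' + w.
Proof. rewrite hS !size_cat (size_takel hk) size_drop /w; lia. Qed.

Lemma nthS_sh y : nth false S (sh k w y) = nth false S' y.
Proof.
rewrite hS /sh; case: ltnP => hy.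
  by rewrite nth_cat (size_takel hk) hy nth_take.
rewrite nth_cat (size_takel hk) ltnNge (leq_trans hy (leq_addr _ _)) /=.
rewrite nth_cat /w ltnNge -addnBAC // leq_addl /= nth_drop; congr nth; lia.
Qed.

Lemma nthS_in z : k <= z < k + w -> nth false S z = nth false W (z - k).
Proof.
move=> /andP[h1 h2].
rewrite hS nth_cat (size_takel hk) ltnNge h1 /= nth_cat /w.
by have -> : z - k < size W by rewrite /w in h2; lia.
Qed.

Lemma sh_out y : ~~ (k <= sh k w y < k + w).
Proof. rewrite /sh; case: (ltnP y k) => h; lia. Qed.

Lemma ins_in z : k <= z < k + w -> ins k w q g z = k + q (z - k).
Proof. move=> /andP[h1 h2]; by rewrite /ins ltnNge h1 /= h2. Qed.

Lemma ins_sh y : ins k w q g (sh k w y) = sh k w (g y).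
Proof.
rewrite /ins /sh; case: (ltnP y k) => h; first by rewrite h.
rewrite ltnNge (leq_trans h (leq_addr _ _)) /=.
have -> : (y + w < k + w) = false by lia.
by rewrite addnK.
Qed.

Lemma out_sh z : ~~ (k <= z < k + w) -> z = sh k w (ush k w z).
Proof. rewrite /sh /ush; case: (ltnP z k) => h /=; first by rewrite h.
rewrite -leqNgt => h2; have -> : (z - w < k) = false by lia. lia. Qed.

Lemma ush_lt z : z < size S -> ~~ (k <= z < k + w) -> ush k w z < size S'.
Proof. rewrite sizeS /ush => hz; case: (ltnP z k) => h //=; first lia.
rewrite -leqNgt => h2; lia. Qed.

Lemma sh_lt y : y < size S' -> sh k w y < size S.
Proof. rewrite sizeS /sh; case: (ltnP y k) => h; lia. Qed.

Lemma sh_mono a b : (sh k w a < sh k w b) = (a < b).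
Proof. rewrite /sh; case: (ltnP a k); case: (ltnP b k) => h1 h2; lia. Qed.

Lemma sh_inj a b : sh k w a = sh k w b -> a = b.
Proof. rewrite /sh; case: (ltnP a k); case: (ltnP b k) => h1 h2; lia. Qed.

Lemma ins_NC : NCnat S (ins k w q g).
Proof.
case: hg => g1 g2 g3 g4 g5; case: hq => q1 q2 q3 q4 q5.
have Hin : forall z, z < size S -> k <= z < k + w -> z - k < size W.
  by move=> z _; rewrite /w; lia.
split.
- move=> z hz; case hi: (k <= z < k + w).
    rewrite ins_in //; have := q1 _ (Hin _ hz hi); rewrite sizeS /w; lia.
  rewrite (out_sh (negbT hi)) ins_sh; apply: sh_lt; apply: g1; exact: ush_lt (negbT hi).
- move=> z hz; case hi: (k <= z < k + w).
    rewrite ins_in // ins_in ?q2 ?Hin //; last first.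
      have := q1 _ (Hin _ hz hi); rewrite /w; lia.
    by rewrite addKn q2 ?Hin ?subnKC //; case/andP: hi.
  by rewrite (out_sh (negbT hi)) !ins_sh g2 // ush_lt // negbT.
- move=> z hz; case hi: (k <= z < k + w).
    rewrite ins_in // => e; apply: (q3 _ (Hin _ hz hi)); lia.
  rewrite (out_sh (negbT hi)) !ins_sh => /sh_inj; apply: g3; exact: ush_lt (negbT hi).
- move=> z hz; case hi: (k <= z < k + w).
    rewrite ins_in // !nthS_in //; last by have := q1 _ (Hin _ hz hi); rewrite /w; lia.
    rewrite addnC addnK; exact: q4 (Hin _ hz hi).
  rewrite (out_sh (negbT hi)) !ins_sh !nthS_sh; apply: g4; exact: ush_lt (negbT hi).
- move=> a b ha hb hab; case ia: (k <= a < k + w); case ib: (k <= b < k + w).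
  + rewrite !ins_in // => h1 h2; apply: (q5 (a - k) (b - k)); rewrite ?Hin //; lia.
  + rewrite ins_in // => h1 _; have := q1 _ (Hin _ ha ia).
    move/negbT: ib; rewrite negb_and -!ltnNge /w => /orP[] h3 h4; move: ia => /andP[]; lia.
  + rewrite (ins_in ib) (out_sh (negbT ia)) ins_sh => h1 h2.
    have := sh_out (g (ush k w a)); rewrite negb_and -!ltnNge => /orP[] h3;
    move: ib => /andP[] h5 h6; have := q1 _ (Hin _ hb (introT andP (conj h5 h6))); rewrite /w; lia.
  + rewrite (out_sh (negbT ia)) (out_sh (negbT ib)) !ins_sh !sh_mono in hab *.
    move=> h1 h2; apply: (g5 _ _ _ _ hab h1 h2); exact: ush_lt (negbT _).
Qed.

Lemma ins_rec y : ush k w (ins k w q g (sh k w y)) = g y.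
Proof. rewrite ins_sh /ush /sh; case: (ltnP (g y) k) => h; first by rewrite h. have -> : (g y + w < k) = false by lia. by rewrite addnK. Qed.

End Ins.

Definition pn N (p : {ffun 'I_N -> 'I_N}) (z : nat) : nat :=
  if (insub z : option 'I_N) is Some o then val (p o) else z.
Definition mkf N (g : nat -> nat) : {ffun 'I_N -> 'I_N} :=
  [ffun o : 'I_N => insubd o (g o)].

Lemma pn_val N (p : {ffun 'I_N -> 'I_N}) (o : 'I_N) : pn p o = p o.
Proof. by rewrite /pn valK. Qed.

Lemma val_mkf N (g : nat -> nat) (o : 'I_N) : g o < N -> val (mkf N g o) = g o.
Proof. by move=> h; rewrite ffunE insubdK. Qed.

Lemma pn_inj N (p1 p2 : {ffun 'I_N -> 'I_N}) :
  (forall z, z < N -> pn p1 z = pn p2 z) -> p1 = p2.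
Proof.
move=> h; apply/ffunP => o; apply: val_inj; have := h o (ltn_ord o); by rewrite !pn_val.
Qed.

Lemma pn_mkf N (g : nat -> nat) z : z < N -> g z < N -> pn (mkf N g) z = g z.
Proof.
move=> hz hg; have -> : z = nat_of_ord (Ordinal hz) by [].
by rewrite pn_val val_mkf.
Qed.

Lemma NC2_NCnat S p : p \in NC2 S -> NCnat S (pn p).
Proof.
rewrite inE => /and3P[/forallP hp /forallP hnc /forallP hr].
have E : forall z (hz : z < size S), pn p z = p (Ordinal hz).
  by move=> z hz; rewrite -(pn_val p (Ordinal hz)).
split.
- by move=> z hz; rewrite (E z hz).
- move=> z hz; rewrite (E z hz) pn_val; by case/andP: (hp (Ordinal hz)) => /eqP -> _.
- move=> z hz; rewrite (E z hz) => e; case/andP: (hp (Ordinal hz)) => _ /eqP; apply.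
  exact: val_inj.
- by move=> z hz; rewrite (E z hz); apply/eqP; apply: (hr (Ordinal hz)).
- move=> a b ha hb hab; rewrite (E a ha) (E b hb) => h1 h2.
  move/forallP: (hnc (Ordinal ha)) => /(_ (Ordinal hb)) /negP; apply.
  rewrite /= hab h1 h2 /=; apply/eqP => e; move: h2; rewrite e /=; move=> h3; have := ltn_trans hab (ltn_trans h1 h3); by rewrite ltnn.
Qed.

Lemma NCnat_NC2 S (g : nat -> nat) : NCnat S g -> mkf (size S) g \in NC2 S.
Proof.
case=> g1 g2 g3 g4 g5.
have V : forall o : 'I_(size S), val (mkf (size S) g o) = g o.
  by move=> o; rewrite val_mkf // g1.
rewrite inE; apply/and3P; split.
- apply/forallP => o; apply/andP; split.
    by apply/eqP; apply: val_inj; rewrite !V g2.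
  by apply/eqP => e; apply: (g3 o) => //; rewrite -V e.
- apply/forallP => a; apply/forallP => b; apply/negP => /and4P[h1 h2 h3 _].
  rewrite !V in h2 h3; exact: (g5 a b).
- by apply/forallP => o; rewrite V; apply/eqP; apply: g4.
Qed.

Definition NB (c : bool) u := nseq u c ++ nseq u (~~ c).
Definition revf u z := (u + u) - z.+1.

Lemma nth_NB c u z : z < u + u -> nth false (NB c u) z = if z < u then c else ~~ c.
Proof.
move=> hz; rewrite /NB nth_cat size_nseq; case: ltnP => h; rewrite nth_nseq ?h //.
by have -> : z - u < u by lia.
Qed.

Lemma NB_NC c u : NCnat (NB c u) (revf u).
Proof.
have Hs : size (NB c u) = u + u by rewrite /NB size_cat !size_nseq.
rewrite /revf; split; rewrite ?Hs.
- move=> z hz; lia.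
- move=> z hz; lia.
- move=> z hz; lia.
- move=> z hz; rewrite !nth_NB; try lia.
  case: (ltnP z u) => h; have -> : (u + u - z.+1 < u) = (u <= z) by lia.
    by rewrite leqNgt h; clear Hs; case: c.
  by rewrite h; clear Hs; case: c.
- move=> a b ha hb; lia.
Qed.

Definition Wq s b := ins (s + s) ((b - s) + (b - s)) (revf (b - s)) (revf s).

Lemma W_NC c s b : NCnat (NB c s ++ NB (~~ c) (b - s)) (Wq s b).
Proof.
rewrite /Wq; have -> : (b - s) + (b - s) = size (NB (~~ c) (b - s)) by rewrite /NB size_cat !size_nseq.
apply: (@ins_NC (NB c s)); last exact: NB_NC; last exact: NB_NC.
  by rewrite /NB size_cat !size_nseq.
have e : size (NB c s) = s + s by rewrite /NB size_cat !size_nseq.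
by rewrite take_oversize ?drop_oversize ?e ?cats0.
Qed.

Lemma Wq_inv s b j : j < b -> (Wq s b (s + j) < s) = (j < s).
Proof.
move=> hj; rewrite /Wq /ins.
case: (ltnP (s + j) (s + s)) => h1.
  rewrite /sh /revf; have -> : (s + s - (s + j).+1 < s + s) by lia.
  have -> : j < s by lia. lia.
have -> : (s + j < s + s + (b - s + (b - s))) by lia.
have -> : (j < s) = false by lia. lia.
Qed.

Section Key.
Variables (c : bool) (U V : seq bool) (x y b : nat).
Let S := U ++ nseq x c ++ nseq b (~~ c) ++ nseq y c ++ V.
Let S' := U ++ nseq (x + y - b) c ++ V.

Definition Gs s (g : nat -> nat) := ins (size U + (x - s)) (b + b) (Wq s b) g.

Lemma W_eq s : s <= b -> NB c s ++ NB (~~ c) (b - s) = nseq s c ++ nseq b (~~ c) ++ nseq (b - s) c.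
Proof.
move=> hs; rewrite /NB negbK -!catA; congr (_ ++ _); rewrite catA -nseqD.
by rewrite subnKC.
Qed.

Lemma S_eq s : s <= x -> b <= y + s -> s <= b ->
  S = take (size U + (x - s)) S' ++ (NB c s ++ NB (~~ c) (b - s)) ++ drop (size U + (x - s)) S'.
Proof.
move=> h1 h2 h3.
have eS' : S' = (U ++ nseq (x - s) c) ++ (nseq (y + s - b) c ++ V).
  rewrite /S' -catA; congr (U ++ _); rewrite catA -nseqD; congr (nseq _ _ ++ _); lia.
have es : size (U ++ nseq (x - s) c) = size U + (x - s) by rewrite size_cat size_nseq.
rewrite eS' take_size_cat // drop_size_cat // W_eq // /S -!catA; congr (_ ++ _).
have -> : nseq x c = nseq (x - s) c ++ nseq s c by rewrite -nseqD subnK.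
rewrite -!catA; congr (_ ++ _); congr (_ ++ _); congr (_ ++ _).
by rewrite catA -nseqD; congr (nseq _ _ ++ _); lia.
Qed.

Lemma sizeW s : s <= b -> size (NB c s ++ NB (~~ c) (b - s)) = b + b.
Proof. move=> h; rewrite /NB !size_cat !size_nseq. lia. Qed.

Lemma kle s : s <= x -> b <= y + s -> size U + (x - s) <= size S'.
Proof. move=> h h'; rewrite /S' !size_cat size_nseq; lia. Qed.

Lemma Gs_NC s g : s <= x -> b <= y + s -> s <= b -> NCnat S' g -> NCnat S (Gs s g).
Proof.
move=> h1 h2 h3 hg; rewrite /Gs -(sizeW h3).
apply: ins_NC (kle h1 h2) (S_eq h1 h2 h3) hg _; exact: W_NC.
Qed.

Lemma Gs_inv s g j : s <= x -> s <= b -> j < b ->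
  (Gs s g (size U + x + j) < size U + x) = (j < s).
Proof.
move=> h1 h3 hj; rewrite /Gs -(sizeW h3) ins_in; last by rewrite sizeW //; lia.
rewrite -(Wq_inv s hj); have -> : size U + x + j - (size U + (x - s)) = s + j by lia.
have -> : size U + x = size U + (x - s) + s by lia. by rewrite ltn_add2l.
Qed.

Lemma Gs_rec s g z : s <= x -> b <= y + s -> s <= b -> ush (size U + (x - s)) (b + b) (Gs s g (sh (size U + (x - s)) (b + b) z)) = g z.
Proof.
move=> h1 h2 h3; rewrite /Gs -(sizeW h3); exact: (ins_rec _ _ _ (kle h1 h2)).
Qed.


Lemma key i : i <= x -> i <= y -> i <= b -> (b <= y) || (b <= x) ->
  i.+1 * #|NC2 S'| <= #|NC2 S|.
Proof.
move=> hx hy hb hxy.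
pose sv (t : nat) := if b <= y then t else b - t.
have svok : forall t, t <= i -> [/\ sv t <= x, b <= y + sv t & sv t <= b].
  move=> t ht; rewrite /sv; case: ifP => h; first by split; lia.
  move: hxy; rewrite h /= => hbx; move/negbT: h; rewrite -ltnNge => h; split; lia.
pose F (u : 'I_i.+1 * {ffun 'I_(size S') -> 'I_(size S')}) :=
  mkf (size S) (Gs (sv u.1) (pn u.2)).
have NCF : forall u, u \in setX [set: 'I_i.+1] (NC2 S') -> NCnat S (Gs (sv u.1) (pn u.2)).
  move=> [t p]; rewrite inE /= => /andP[_ hp].
  have [h1 h2 h3] := svok t (ltn_ord t) .
  apply: Gs_NC => //; exact: NC2_NCnat.
rewrite -[i.+1]card_ord -cardsT -cardsX -(card_in_imset (f := F)).
  apply: subset_leq_card; apply/subsetP => _ /imsetP[u hu ->].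
  exact: NCnat_NC2 (NCF u hu).
move=> [t1 p1] [t2 p2] hu1 hu2 /= e.
have E : forall z, z < size S -> Gs (sv t1) (pn p1) z = Gs (sv t2) (pn p2) z.
  move=> z hz; case: (NCF _ hu1) => f1 _ _ _ _; case: (NCF _ hu2) => f2 _ _ _ _.
  have h1 := pn_mkf hz (f1 _ hz); have h2 := pn_mkf hz (f2 _ hz).
  by rewrite /= in h1 h2; rewrite -h1 -h2 /F /= in e *; rewrite e.
have [a1 a2 a3] := svok t1 (ltn_ord t1).
have [b1 b2 b3] := svok t2 (ltn_ord t2).
have es : sv t1 = sv t2.
  apply/eqP; apply/negP => /negP hne.
  pose j := minn (sv t1) (sv t2).
  have hj : j < b by rewrite /j; lia.
  have hz : size U + x + j < size S by rewrite /S !size_cat !size_nseq; lia.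
  have := E _ hz; move/(congr1 (fun v => v < size U + x)).
  rewrite !Gs_inv //; rewrite /j; lia.
have et : t1 = t2.
  apply: ord_inj; move: es; rewrite /sv; case: ifP => _ //.
  have := ltn_ord t1; have := ltn_ord t2; lia.
subst t2; congr (_, _); apply: pn_inj => z hz.
rewrite -(Gs_rec (pn p1) z a1 a2 a3) -(Gs_rec (pn p2) z a1 a2 a3) E //.
rewrite -(sizeW a3); apply: (sh_lt (kle a1 a2) (S_eq a1 a2 a3) hz).
Qed.
End Key.

Fixpoint rstr (c : bool) (l : seq nat) : seq bool :=
  if l is x :: l' then nseq x c ++ rstr (~~ c) l' else [::].

Lemma main r : forall l i, size l = r.+1 + r.+1 -> all (leq i) l ->
  count id (rstr true l) = count negb (rstr true l) ->
  (1 + i) ^ r <= #|NC2 (rstr true l)|.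
Proof.
elim: r => [|r IH] l i.
  case: l => [|a [|a' [|? ?]]] //= _ _.
  rewrite cats0 !count_cat !count_nseq /= => ea; have {ea} ea : a = a' by lia.
  subst a'; rewrite expn0; apply/card_gt0P; exists (mkf _ (revf a)).
  exact: (NCnat_NC2 (NB_NC true a)).
case: l => [|x1 [|x2 [|x3 [|x4 rest]]]] /= hs; try (exfalso; move: hs; lia).
move=> /andP[h1 /andP[h2 /andP[h3 /andP[h4 h5]]]] hc.
rewrite expnS.
case: (leqP x2 x3) => h23.
  have K := key true [::] (rstr false (x4 :: rest)) h1 h3 h2 (introT orP (or_introl h23)).
  apply: leq_trans K; rewrite leq_mul2l; apply/orP; right.
  apply: (IH ((x1 + x3 - x2) :: x4 :: rest)).
  - by move: hs => /=; lia.
  - by rewrite /= h4 h5 andbT; lia.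
  - move: hc; rewrite /= !count_cat !count_nseq /=; lia.
have K := key false (nseq x1 true) (rstr true rest) h2 h4 h3 (introT orP (or_intror (ltnW h23))).
apply: leq_trans K; rewrite leq_mul2l; apply/orP; right.
apply: (IH (x1 :: (x2 + x4 - x3) :: rest)).
- by move: hs => /=; lia.
- by rewrite /= h1 h5 andbT; lia.
- move: hc; rewrite /= !count_cat !count_nseq /=; lia.
Qed.

Lemma rstr_flat r (n m : 'I_r -> nat) (s : seq 'I_r) :
  rstr true (flatten [seq [:: n k; m k] | k <- s]) =
  flatten [seq nseq (n k) true ++ nseq (m k) false | k <- s].
Proof. elim: s => //= k s ->; by rewrite catA. Qed.

Lemma size_flat r (n m : 'I_r -> nat) (s : seq 'I_r) :
  size (flatten [seq [:: n k; m k] | k <- s]) = size s + size s.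
Proof. elim: s => //= k s ->; lia. Qed.

Lemma count_flat r (n m : 'I_r -> nat) (s : seq 'I_r) :
  count id (flatten [seq nseq (n k) true ++ nseq (m k) false | k <- s]) = \sum_(k <- s) n k /\
  count negb (flatten [seq nseq (n k) true ++ nseq (m k) false | k <- s]) = \sum_(k <- s) m k.
Proof.
elim: s => [|k s [IH1 IH2]]; first by rewrite !big_nil.
by rewrite /= !count_cat !count_nseq /= !big_cons IH1 IH2; split; lia.
Qed.

Lemma minseq_le (l : seq nat) d : all (leq (foldr minn d l)) l.
Proof.
elim: l => //= a l IH; rewrite geq_minl /=.
apply/allP => z hz; apply: leq_trans (geq_minr _ _) _; exact: (allP IH).
Qed.

Theorem proposition3p2 (r : nat) (n m : 'I_r -> nat)
  (hr : (1 <= r)%N)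
  (hn : forall k, (1 <= n k)%N) (hm : forall k, (1 <= m k)%N)
  (hsum : (\sum_(k < r) n k)%N = (\sum_(k < r) m k)%N) :
  ((1 + imin n m) ^ (r - 1) <= #|NC2 (runString n m)|)%N.
Proof.
case: r hr n m hn hm hsum => // r _ n m _ _ hsum.
have E : runString n m = rstr true (flatten [seq [:: n k; m k] | k <- enum 'I_r.+1]).
  by rewrite rstr_flat.
rewrite E /imin subn1 /=; apply: main.
- by rewrite size_flat size_enum_ord.
- exact: minseq_le.
- rewrite rstr_flat; have [-> ->] := count_flat n m (enum 'I_r.+1).
  by rewrite !big_enum.
Qed.
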